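(* Let $\psi^\infty:[0,\infty)\to X$ be a bounded, differentiable solution of the conventional adjoint equation $$\frac{d\psi^\infty}{dt} + f_u^*(t)\,\psi^\infty + J_u(t) = 0,$$ which moreover satisfies $\lim_{T\to\infty}\frac{1}{T}\int_0^T \psi^\infty(t)^T f(t)\,dt = 0$. Then $$\psi^\infty(t)^T f(t) = \bar J - J(t)\qquad\text{for all } t\ge 0 .$$
   Context: Let $X=\mathbb{R}^n$ with inner product $x^Ty$. Let $f:X\times\mathbb{R}\to X$ be $C^2$, fix the parameter $s\in\mathbb{R}$, and let $u(t)$, $t\ge 0$, solve $\frac{du}{dt}=f(u,s)$. Write $f(t)=f(u(t),s)$, let $f_u(t)$ be the Jacobian $\partial f/\partial u$ at $(u(t),s)$, and let $f_u^*(t)=f_u(t)^T$. Let $J:X\times\mathbb{R}\to\mathbb{R}$ be smooth, with $J(t)=J(u(t),s)$ and $J_u(t)$ the gradient of $J$ with respect to $u$ at $(u(t),s)$, written as a column vector. Let $\bar J=\lim_{T\to\infty}\frac1T\int_0^T J(t)\,dt$, assumed to exist. *)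

(* Defs.v *)
From mathcomp Require Import all_boot all_order all_algebra.
From mathcomp Require Import all_classical all_reals all_analysis.
Import numFieldNormedType.Exports.
Import Order.TTheory GRing.Theory Num.Theory.

Set Implicit Arguments.
Unset Strict Implicit.
Unset Printing Implicit Defensive.

Local Open Scope classical_set_scope.
Local Open Scope ring_scope.

(* C^k regularity: C^0 = continuous; C^(k+1) = differentiable everywhere with
   every directional derivative x |-> 'D_v g x of class C^k
   (in finite dimension this is the usual notion of C^k). *)
Fixpoint Ck {R : realType} {V W : normedModType R} (k : nat) (g : V -> W) : Prop :=
  match k with
  | 0 => continuous g
  | k'.+1 => (forall x, differentiable g x) /\ (forall v, Ck k' (fun x => 'D_v g x))
  end.

Definition smooth {R : realType} {V W : normedModType R} (g : V -> W) : Prop :=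
  forall k, Ck k g.

Definition dot {R : realType} {n : nat} (x y : 'rV[R]_n) : R :=
  \sum_(i < n) x 0 i * y 0 i.

Definition grad {R : realType} {n : nat} (g : 'rV[R]_n -> R) (x : 'rV[R]_n) : 'rV[R]_n :=
  \row_i ('d g x (delta_mx 0 i : 'rV[R]_n)).

(* With the row-vector convention of the library, h *m 'J g x = 'd g x h, so
   the adjoint w.r.t. the standard inner product is w |-> w *m ('J g x)^T. *)
Definition jac_adj {R : realType} {n : nat} (g : 'rV[R]_n -> 'rV[R]_n)
  (x w : 'rV[R]_n) : 'rV[R]_n :=
  w *m ('J g x)^T.

Definition deriv_on_Ici {R : realType} {n : nat} (y y' : R -> 'rV[R]_n) : Prop :=
  (forall t : R, 0 < t -> is_derive t 1 y (y' t)) /\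
  ((fun h : R => h^-1 *: (y h - y 0)) @ 0^'+ --> y' 0).

Definition avg {R : realType} (g : R -> R) (T : R) : R :=
  T^-1 * \int[@lebesgue_measure R]_(t in `[0, T]) g t.

(* Main.v *)
Require Import Defs.
From mathcomp Require Import all_boot all_order all_algebra.
From mathcomp Require Import all_classical all_reals all_analysis.
Import numFieldNormedType.Exports.
Import Order.TTheory GRing.Theory Num.Theory.
Local Open Scope classical_set_scope.
Local Open Scope ring_scope.
Lemma chain_der (R: realType) (V W : normedModType R) (g : V -> W) (y : R -> V) (t : R) (y' : V) :
  is_derive t 1 y y' -> differentiable g (y t) -> is_derive t 1 (g \o y) ('d g (y t) y').
Proof.
move=> dy dg.
have dyt : differentiable y t by apply/derivable1_diffP; exact: ex_derive.
have dc : differentiable (g \o y) t by exact: differentiable_comp.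
apply: DeriveDef; first exact/derivable1_diffP.
rewrite deriveE // diff_comp //=. rewrite -(@deriveE _ _ _ y t 1 dyt).
by rewrite (@derive_val _ _ _ _ _ _ _ dy).
Qed.

Lemma coord_der (R: realType) n (a : R -> 'rV[R]_n) (t : R) (a' : 'rV[R]_n) (i : 'I_n) :
  is_derive t 1 a a' -> is_derive t 1 (fun s => a s 0 i) (a' 0 i).
Proof.
move=> da.
have @f : {linear 'M[R]_(1, n) -> R}.
  by exists (fun N : 'M[R]_(_, _) => N 0 i); do 2![eexists]; do ?[constructor];
     rewrite ?mxE// => ? *; rewrite ?mxE//; move=> ?; rewrite !mxE.
have fc : continuous f by exact: coord_continuous.
have := @chain_der _ _ _ f a t a' da (linear_differentiable (a t) fc). by rewrite diff_lin.
Qed.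

Lemma right_cont (R: realType) n (y y' : R -> 'rV[R]_n) :
  deriv_on_Ici y y' -> y @ 0^'+ --> y 0.
Proof.
move=> [_ H].
have H2 : (fun h : R => h *: (h^-1 *: (y h - y 0))) @ 0^'+ --> (0:R) *: y' 0.
  apply: cvgZ => //; exact: cvg_at_right_filter (cvg_id).
rewrite scale0r in H2.
have H3 : (fun h : R => h *: (h^-1 *: (y h - y 0)) + y 0) @ 0^'+ --> 0 + y 0.
  by apply: cvgD => //; exact: cvg_cst.
rewrite add0r in H3.
apply: cvg_trans H3; apply: near_eq_cvg; near=> h.
by rewrite scalerA divff ?scale1r ?subrK.
Unshelve. all: by end_near.
Qed.
Lemma dot_adj (R: realType) n (p h : 'rV[R]_n) (M : 'M[R]_n) :
  dot p (h *m M) = dot (p *m M^T) h.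
Proof.
rewrite /dot.
under eq_bigr do rewrite mxE mulr_sumr.
under [RHS]eq_bigr do rewrite mxE mulr_suml.
rewrite exchange_big /=; apply: eq_bigr => i _; apply: eq_bigr => j _.
by rewrite ?mxE -mulrA [h 0 i * _]mulrC.
Qed.

Lemma dot_grad (R: realType) n (g : 'rV[R]_n -> R) x (h : 'rV[R]_n) :
  dot (grad g x) h = 'd g x h.
Proof.
rewrite /dot /grad.
have -> : h = \sum_(i < n) h 0 i *: (delta_mx 0 i : 'rV[R]_n).
  apply/rowP => j; rewrite summxE (bigD1 j) //= big1 ?addr0.
    by rewrite !mxE !eqxx mulr1.
  by move=> k kj; rewrite !mxE eqxx eq_sym (negbTE kj) mulr0.
rewrite linear_sum; apply: eq_bigr => i _.
rewrite linearZ /= mxE mulrC; congr (_ * _).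
rewrite summxE (bigD1 i) //= big1 ?addr0; first by rewrite !mxE !eqxx mulr1.
by move=> k ki; rewrite !mxE eqxx eq_sym (negbTE ki) mulr0.
Qed.

Lemma dot_der (R: realType) n (a b : R -> 'rV[R]_n) (t : R) (a' b' : 'rV[R]_n) :
  is_derive t 1 a a' -> is_derive t 1 b b' ->
  is_derive t 1 (fun s => dot (a s) (b s)) (dot a' (b t) + dot (a t) b').
Proof.
move=> da db.
have E : (fun s => dot (a s) (b s)) =
   \sum_(i < n) ((fun s => a s 0 i) * (fun s => b s 0 i)).
  by apply/funext => s; rewrite fct_sumE /dot.
rewrite E.
have -> : dot a' (b t) + dot (a t) b' =
   \sum_(i < n) ((a t 0 i) *: (b' 0 i) + (b t 0 i) *: (a' 0 i)).
  rewrite /dot -big_split /=; apply: eq_bigr => i _.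
  by rewrite addrC [a' 0 i * _]mulrC.
apply: is_derive_sum => i.
apply: is_deriveM; exact: coord_der.
Qed.

Lemma dotBl (R: realType) n (a b c : 'rV[R]_n) :
  dot (- a - b) c = - dot a c - dot b c.
Proof.
rewrite /dot -sumrN -sumrB; apply: eq_bigr => i _.
by rewrite !mxE mulrBl mulNr.
Qed.

Lemma cont_on (R:realType) (g : R -> R) (T : R) : 0 < T ->
  (forall x, 0 < x -> derivable g x 1) -> g @ 0^'+ --> g 0 ->
  {within `[0,T], continuous g}.
Proof.
move=> T0 dg g0; apply/continuous_within_itvP => //; split => //.
- move=> x; rewrite in_itv /= => /andP[x0 _].
  exact/differentiable_continuous/derivable1_diffP/dg.
- apply: cvg_at_left_filter.
  exact/differentiable_continuous/derivable1_diffP/dg.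
Qed.

Lemma dot_right (R: realType) n (a b : R -> 'rV[R]_n) :
  a @ 0^'+ --> a 0 -> b @ 0^'+ --> b 0 ->
  (fun h => dot (a h) (b h)) @ 0^'+ --> dot (a 0) (b 0).
Proof.
move=> ra rb; rewrite /dot.
apply: cvg_big => [|i _]; first exact: add_continuous.
apply: cvgM.
- exact: (cvg_comp _ _ ra (@coord_continuous _ _ _ 0 i (a 0))).
- exact: (cvg_comp _ _ rb (@coord_continuous _ _ _ 0 i (b 0))).
Qed.

Theorem mainTheorem1 (R : realType) (n : nat)
  (f : 'rV[R]_n * R -> 'rV[R]_n) (J : 'rV[R]_n * R -> R) (s : R)
  (u : R -> 'rV[R]_n) (Jbar : R) (psi : R -> 'rV[R]_n) :
  Ck 2 f ->
  smooth J ->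
  deriv_on_Ici u (fun t => f (u t, s)) ->
  avg (fun t => J (u t, s)) T @[T --> +oo] --> Jbar ->
  (exists M : R, forall t, 0 <= t -> `|psi t| <= M) ->
  deriv_on_Ici psi (fun t => - jac_adj (fun v => f (v, s)) (u t) (psi t)
                             - grad (fun v => J (v, s)) (u t)) ->
  avg (fun t => dot (psi t) (f (u t, s))) T @[T --> +oo] --> 0 ->
  forall t : R, 0 <= t -> dot (psi t) (f (u t, s)) = Jbar - J (u t, s).
Proof.
move=> Hf HJ Hu HJbar _ Hpsi Havg.
pose F := fun v => f (v, s).
pose Jf := fun v => J (v, s).
have dF : forall v, differentiable F v.
  move=> v; change (differentiable (f \o (fun w => (w, s))) v).
  apply: differentiable_comp; first exact: differentiable_pair.
  exact: Hf.1.
have dJ : forall v, differentiable Jf v.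
  move=> v; change (differentiable (J \o (fun w => (w, s))) v).
  apply: differentiable_comp; first exact: differentiable_pair.
  exact: (HJ 1%N).1.
pose Phi := fun x => dot (psi x) (F (u x)) + Jf (u x).
have dJu : forall x : R, 0 < x -> is_derive x 1 (Jf \o u) ('d Jf (u x) (F (u x))).
  move=> x x0; exact: (@chain_der _ _ _ Jf u x _ (Hu.1 x x0) (dJ (u x))).
have dPhi : forall x : R, 0 < x -> is_derive x 1 Phi 0.
  move=> x x0.
  have du : is_derive x 1 u (F (u x)) := Hu.1 x x0.
  have dp := Hpsi.1 x x0.
  have dFu := @chain_der _ _ _ F u x _ du (dF (u x)).
  have dd := @dot_der _ _ _ _ _ _ _ dp dFu.
  have E : Phi = (fun s => dot (psi s) ((F \o u) s)) + (Jf \o u) by apply/funext.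
  rewrite E; apply: is_derive_eq (is_deriveD dd (dJu x x0)) _.
  have E2 : 'd F (u x) (F (u x)) = F (u x) *m 'J F (u x).
    by rewrite /jacobian mul_rV_lin1.
  rewrite E2 dot_adj dotBl dot_grad /jac_adj /=.
  rewrite -/F -/Jf.
  by rewrite addrAC addrNK addNr.
have ru := @right_cont _ _ _ _ Hu; have rp := @right_cont _ _ _ _ Hpsi.
have rF : (F \o u) @ 0^'+ --> (F \o u) 0.
  exact: (cvg_comp _ _ ru (differentiable_continuous (dF (u 0)))).
have rJ : (Jf \o u) @ 0^'+ --> (Jf \o u) 0.
  exact: (cvg_comp _ _ ru (differentiable_continuous (dJ (u 0)))).
have rPhi : Phi @ 0^'+ --> Phi 0.
  apply: cvgD => //; exact: (@dot_right _ _ _ _ rp rF).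
have cst : forall x, 0 <= x -> Phi x = Phi 0.
  move=> x; rewrite le_eqVlt => /predU1P[<-//|x0].
  have [c _ ] := @MVT R Phi (fun _ => 0) 0 x x0
     (fun y yI => dPhi y (andP yI).1)
     (@cont_on _ _ _ x0 (fun y y0 => @ex_derive _ _ _ _ _ _ _ (dPhi y y0)) rPhi).
  by rewrite mul0r => /eqP; rewrite subr_eq0 => /eqP.
have Havg_eq : forall T, 0 < T ->
    avg (fun t => dot (psi t) (f (u t, s))) T = Phi 0 - avg (fun t => J (u t, s)) T.
  move=> T T0; rewrite /avg.
  have -> : \int[lebesgue_measure]_(t in `[0, T]) dot (psi t) (f (u t, s)) =
      \int[lebesgue_measure]_(x in `[0, T]) (Phi 0 - Jf (u x)).
    apply: eq_Rintegral => x; rewrite inE /= in_itv /= => /andP[x0 _].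
    by rewrite -(cst x x0) /Phi addrK.
  rewrite RintegralB //; first last.
  - apply: continuous_compact_integrable; first exact: segment_compact.
    exact: (@cont_on _ _ _ T0 (fun y y0 => @ex_derive _ _ _ _ _ _ _ (dJu y y0)) rJ).
  - apply: continuous_compact_integrable; first exact: segment_compact.
    by move=> ?; exact: cvg_cst.
  have HL : fine (@lebesgue_measure R `[0, T]%classic) = T.
    by rewrite lebesgue_measure_itv /= lte_fin T0 /= subr0.
  rewrite Rintegral_cst // HL.
  by rewrite mulrBr mulrCA mulVf ?mulr1 // gt_eqF.
have L1 : avg (fun t => dot (psi t) (f (u t, s))) T @[T --> +oo] --> Phi 0 - Jbar.
  apply: cvg_trans (cvgB (cvg_cst (Phi 0)) HJbar).
  apply: near_eq_cvg; near=> T.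
  rewrite /= Havg_eq //; near: T; exact: nbhs_pinfty_gt.
have PJ : Phi 0 - Jbar = 0 := cvg_unique _ L1 Havg.
move=> t t0; have E := cst t t0.
have PJ' : Phi 0 = Jbar by apply/eqP; rewrite -subr_eq0 PJ.
by rewrite -PJ' -E /Phi /F /Jf addrK.
Unshelve. all: by end_near.
Qed.
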